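(* Let $f:\mathbb{R}^d\to\mathbb{R}$ be $L$-smooth (i.e. $\|\nabla f(\mathbf{x})-\nabla f(\mathbf{y})\|\le L\|\mathbf{x}-\mathbf{y}\|$ for all $\mathbf{x},\mathbf{y}$) with $f_*=\inf_{\mathbf{x}} f(\mathbf{x})>-\infty$. Let $T\ge1$, $\eta>0$, $0\le\lambda\le\frac{1}{2\eta T}$, let $\mathbf{x}_1$ satisfy $\|\mathbf{x}_1\|_\infty\le\eta$ and $f(\mathbf{x}_1)-f_*\le\Delta_f$, and let $\mathbf{v}_1,\dots,\mathbf{v}_T$ be arbitrary (possibly random) vectors in $\mathbb{R}^d$. Define $\mathbf{x}_{t+1}=\mathbf{x}_t-\eta(\operatorname{sign}(\mathbf{v}_t)+\lambda\mathbf{x}_t)$ for $t=1,\dots,T$. Then $$\mathbb{E}\left[\frac1T\sum_{t=1}^T\|\nabla f(\mathbf{x}_t)\|_1\right]\le \frac{2\Delta_f}{\eta T}+4\sqrt d\,\sqrt{\mathbb{E}\left[\frac1T\sum_{t=1}^T\|\nabla f(\mathbf{x}_t)-\mathbf{v}_t\|^2\right]}+4\eta L d .$$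
   Context: $\|\cdot\|$ is the Euclidean norm, $\|\cdot\|_1$ and $\|\cdot\|_\infty$ the $\ell_1$- and max-norms. $\operatorname{sign}$ is applied coordinatewise with values in $\{-1,0,1\}$. *)

(* Defs.v *)
From HB Require Import structures.
From mathcomp Require Import all_boot all_order all_algebra.
From mathcomp Require Import all_classical all_reals all_analysis.
Set Implicit Arguments. Unset Strict Implicit. Unset Printing Implicit Defensive.
Import Order.TTheory GRing.Theory Num.Theory.
Import numFieldNormedType.Exports.
Local Open Scope ring_scope.

Definition enorm (R : realType) (d : nat) (u : 'rV[R]_d) : R :=
  Num.sqrt (\sum_(i < d) u 0 i ^+ 2).

Definition l1norm (R : realType) (d : nat) (u : 'rV[R]_d) : R :=
  \sum_(i < d) `|u 0 i|.

Definition linfnorm (R : realType) (d : nat) (u : 'rV[R]_d) : R :=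
  \big[Num.max/0]_(i < d) `|u 0 i|.

Definition vsign (R : realType) (d : nat) (u : 'rV[R]_d) : 'rV[R]_d :=
  \row_(i < d) Num.sg (u 0 i).

Definition grad (R : realType) (d : nat) (f : 'rV[R]_d -> R) (x : 'rV[R]_d)
  : 'rV[R]_d :=
  \row_(i < d) ('d f x (delta_mx 0 i : 'rV[R]_d)).

(* Main.v *)
Require Import Defs.
From HB Require Import structures.
From mathcomp Require Import all_boot all_order all_algebra.
From mathcomp Require Import all_classical all_reals all_analysis.
From mathcomp Require Import ring lra measurable_realfun.
Import Order.TTheory GRing.Theory Num.Theory.
Import numFieldNormedType.Exports.
Local Open Scope classical_set_scope.
Local Open Scope ring_scope.

Section S.
Variables (R : realType) (d : nat).

Lemma diff_grad (f : 'rV[R]_d -> R) (y h : 'rV[R]_d) :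
  'd f y h = \sum_i grad f y 0 i * h 0 i.
Proof.
rewrite {1}(row_sum_delta h) linear_sum /=.
apply: eq_bigr => i _; rewrite linearZ /= mxE mulrC.
by [].
Qed.

Lemma phi_derive (f : 'rV[R]_d -> R) (x h : 'rV[R]_d) (s : R) :
  differentiable f (s *: h + x) ->
  is_derive s 1 (fun s : R => f (s *: h + x)) ('d f (s *: h + x) h).
Proof.
move=> df.
have E : (fun e : R => e^-1 *: ((fun s : R => f (s *: h + x)) (e *: 1 + s) - (fun s : R => f (s *: h + x)) s))
   = (fun e : R => e^-1 *: (f (e *: h + (s *: h + x)) - f (s *: h + x))).
  apply/funext => e /=; rewrite [e *: 1]mulr1 scalerDl addrA //.
have D : derivable f (s *: h + x) h by exact: diff_derivable.
apply: DeriveDef.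
  by rewrite /derivable E.
by rewrite -deriveE // /derive E.
Qed.

Lemma psi_derive (f : 'rV[R]_d -> R) (x h : 'rV[R]_d) (c k s : R) :
  differentiable f (s *: h + x) ->
  is_derive s 1 (fun s : R => f (s *: h + x) - s * c - k * (s * s))
     ('d f (s *: h + x) h - c - k * (s + s)).
Proof.
move=> df.
have H := is_deriveB (is_deriveB (@phi_derive f x h s df)
   (is_deriveM (is_derive_id s 1) (is_derive_cst c s 1)))
   (is_deriveM (is_derive_cst k s 1) (is_deriveM (is_derive_id s 1) (is_derive_id s 1))).
apply: is_derive_eq.
by rewrite !scaler0 !addr0 add0r /cst /GRing.scale /= !mulr1.
Qed.

Lemma CS2 (n : nat) (a b : 'I_n -> R) :
  (\sum_i a i * b i) ^+ 2 <= (\sum_i a i ^+ 2) * (\sum_i b i ^+ 2).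
Proof.
pose Y i j := a i ^+ 2 * b j ^+ 2.
pose Z i j := (a i * b i) * (a j * b j).
have E : \sum_i \sum_j (a i * b j - a j * b i) ^+ 2 =
   \sum_i \sum_j Y i j + \sum_i \sum_j Y j i - 2 * \sum_i \sum_j Z i j.
  rewrite mulr_sumr -big_split -sumrB /=; apply: eq_bigr => i _.
  rewrite mulr_sumr -big_split -sumrB /=; apply: eq_bigr => j _.
  rewrite /Y /Z; ring.
have EY : \sum_i \sum_j Y j i = \sum_i \sum_j Y i j by exact: exchange_big.
have E2 : (\sum_i a i ^+ 2) * (\sum_i b i ^+ 2) = \sum_i \sum_j Y i j.
  by rewrite big_distrlr.
have E3 : (\sum_i a i * b i) ^+ 2 = \sum_i \sum_j Z i j.
  by rewrite expr2 big_distrlr.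
have : 0 <= \sum_i \sum_j (a i * b j - a j * b i) ^+ 2.
  by apply: sumr_ge0 => i _; apply: sumr_ge0 => j _; apply: sqr_ge0.
rewrite E EY E2 E3; lra.
Qed.

Lemma CS (n : nat) (a b : 'I_n -> R) :
  \sum_i a i * b i <= Num.sqrt (\sum_i a i ^+ 2) * Num.sqrt (\sum_i b i ^+ 2).
Proof.
rewrite -sqrtrM; last by apply: sumr_ge0 => i _; apply: sqr_ge0.
apply: le_trans (ler_norm _) _.
rewrite -sqrtr_sqr; apply: ler_wsqrtr; exact: CS2.
Qed.

Lemma mxBE (A B : 'rV[R]_d) i : (A - B) 0 i = A 0 i - B 0 i.
Proof. by rewrite !mxE. Qed.

Lemma descent (f : 'rV[R]_d -> R) (L : R)
  (f_diff : forall x, differentiable f x)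
  (f_smooth : forall x y, enorm (grad f x - grad f y) <= L * enorm (x - y))
  (x h : 'rV[R]_d) :
  f (h + x) <= f x + \sum_i grad f x 0 i * h 0 i + L / 2 * \sum_i h 0 i ^+ 2.
Proof.
set c := \sum_i grad f x 0 i * h 0 i.
set N := \sum_i h 0 i ^+ 2.
set k := L / 2 * N.
pose psi := fun s : R => f (s *: h + x) - s * c - k * (s * s).
pose dpsi := fun s : R => 'd f (s *: h + x) h - c - k * (s + s).
have D (s : R) : is_derive s 1 psi (dpsi s) by exact: psi_derive.
have C : {within `[0, 1], continuous psi}.
  apply: continuous_subspaceT => s.
  apply: differentiable_continuous; apply/derivable1_diffP.
  by have [] := D s.
have [xi xi01 E] := MVT ltr01 (fun s _ => D s) C.
have N0 : 0 <= N by apply: sumr_ge0 => i _; apply: sqr_ge0.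
have xi0 : 0 <= xi by move: xi01; rewrite in_itv /= => /andP[/ltW].
have Hd : dpsi xi <= 0.
  rewrite /dpsi diff_grad /c -sumrB.
  have -> : \sum_i (grad f (xi *: h + x) 0 i * h 0 i - grad f x 0 i * h 0 i)
     = \sum_i (grad f (xi *: h + x) - grad f x) 0 i * h 0 i.
    by apply: eq_bigr => i _; rewrite mxBE mulrBl.
  have HC : \sum_i (grad f (xi *: h + x) - grad f x) 0 i * h 0 i <=
     enorm (grad f (xi *: h + x) - grad f x) * Num.sqrt N.
    exact (@CS d (fun i => (grad f (xi *: h + x) - grad f x) 0 i) (fun i => h 0 i)).
  have Hs := f_smooth (xi *: h + x) x.
  have En : enorm (xi *: h + x - x) = xi * Num.sqrt N.
    rewrite /enorm addrK.
    have -> : \sum_i (xi *: h) 0 i ^+ 2 = xi ^+ 2 * N.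
      by rewrite /N mulr_sumr; apply: eq_bigr => i _; rewrite mxE exprMn.
    by rewrite sqrtrM ?sqr_ge0 // sqrtr_sqr ger0_norm.
  rewrite En in Hs.
  have Hs' := ler_wpM2r (sqrtr_ge0 N) Hs.
  have SN : Num.sqrt N * Num.sqrt N = N by rewrite -expr2 sqr_sqrtr.
  have : L * (xi * Num.sqrt N) * Num.sqrt N = L * xi * N by rewrite -[in RHS]SN; ring.
  rewrite /k; lra.
move: E; rewrite /psi scale1r scale0r add0r subr0 => E.
have : dpsi xi * 1 <= 0 by rewrite mulr1.
rewrite -E /k; lra.
Qed.
End S.

Section R1.
Variable R : realType.

Lemma sg_bnd (r : R) : -1 <= Num.sg r <= 1.
Proof.
case: (ltgtP r 0) => h.
- by rewrite ltr0_sg // lexx /=; lra.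
- by rewrite gtr0_sg // lexx andbT; lra.
- by rewrite h sgr0; apply/andP; split; lra.
Qed.

Lemma sg_ineq (g v : R) : `|g| - 2 * `|g - v| <= g * Num.sg v.
Proof.
have h1 := ler_norm (g - v).
have h2 : v - g <= `|g - v| by rewrite distrC; exact: ler_norm.
case: (ltgtP v 0) => hv.
- rewrite ltr0_sg // mulrN1.
  case: (lerP 0 g) => hg; [rewrite ger0_norm // | rewrite ltr0_norm //]; lra.
- rewrite gtr0_sg // mulr1.
  case: (lerP 0 g) => hg; [rewrite ger0_norm // | rewrite ltr0_norm //]; lra.
- rewrite hv sgr0 mulr0; rewrite hv subr0 in h1 h2 *; have := normr_ge0 g; lra.
Qed.

Lemma coord_step (eta lam g v a : R) : 0 < eta -> 0 <= lam -> lam * `|a| <= 1/2 ->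
  g * (- eta * (Num.sg v + lam * a)) <= - (eta / 2) * `|g| + 2 * eta * `|g - v|
  /\ (- eta * (Num.sg v + lam * a)) ^+ 2 <= 9 / 4 * eta ^+ 2.
Proof.
move=> he hl ha; split.
  have h1 := ler_wpM2l (ltW he) (sg_ineq g v).
  have h2 : - (g * a) <= `|g| * `|a| by rewrite -normrM -normrN; exact: ler_norm.
  have h3 := ler_wpM2l (ltW he) (ler_wpM2l (normr_ge0 g) ha).
  have h4 := ler_wpM2l (mulr_ge0 (ltW he) hl) h2.
  have e1 : eta * (`|g| * (lam * `|a|)) = eta * lam * (`|g| * `|a|) by ring.
  have e2 : g * (- eta * (Num.sg v + lam * a)) = - (eta * (g * Num.sg v)) + eta * lam * (- (g * a)) by ring.
  rewrite e2; lra.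
have /andP[s1 s2] := sg_bnd v.
have : - (1/2) <= lam * a <= 1/2.
  have : `|lam * a| <= 1/2 by rewrite normrM (ger0_norm hl).
  by rewrite ler_norml.
move=> /andP[a1 a2].
set y := Num.sg v + lam * a.
have y1 : - (3/2) <= y by rewrite /y; lra.
have y2 : y <= 3/2 by rewrite /y; lra.
have : 0 <= (3/2 - y) * (3/2 + y) by apply: mulr_ge0; lra.
have : (- eta * y) ^+ 2 = eta ^+ 2 * (y ^+ 2) by ring.
move=> ->; move=> hy.
have : y ^+ 2 <= 9/4 by move: hy; rewrite expr2; nra.
move=> hy2; have := ler_wpM2l (sqr_ge0 eta) hy2; lra.
Qed.

Lemma am_gm (e s : R) : 0 < s -> e <= (e ^+ 2 / s + s) / 2.
Proof.
move=> s0.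
have : 0 <= s * ((e ^+ 2 / s + s) / 2 - e).
  have -> : s * ((e ^+ 2 / s + s) / 2 - e) = (e - s) ^+ 2 / 2.
    by field; rewrite gt_eqF.
  by apply: divr_ge0 => //; apply: sqr_ge0.
rewrite pmulr_rge0 // subr_ge0 //.
Qed.

Lemma tele (u p : nat -> R) (n : nat) :
  (forall t, (1 <= t <= n)%N -> p t <= u t - u t.+1) ->
  \sum_(1 <= t < n.+1) p t <= u 1%N - u n.+1.
Proof.
elim: n => [_|n IH H]; first by rewrite big_geq // subrr.
rewrite big_nat_recr //=.
have := IH (fun t ht => H t (ltac:(by move: ht => /andP[-> /leqW]))).
have := H n.+1 (ltac:(by rewrite leqnn)).
lra.
Qed.
End R1.

Section M.
Variables (R : realType) (dO : measure_display) (Omega : measurableType dO).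

Lemma meas_b2R : measurable_fun setT (fun b : bool => (b : nat)%:R : R).
Proof. by move=> _ Y mY. Qed.

Definition fmeas (A : Type) (g : Omega -> A) :=
  forall H : A -> R, measurable_fun setT (fun w => H (g w)).

Arguments fmeas [A].

Lemma fmeas_cst (A : Type) (a : A) : fmeas (fun _ => a).
Proof. by move=> H; exact: measurable_cst. Qed.

Lemma fmeas_comp (A B : Type) (g : Omega -> A) (F : A -> B) :
  fmeas g -> fmeas (fun w => F (g w)).
Proof. by move=> mg H; exact: (mg (fun a => H (F a))). Qed.

Lemma fmeas_sg (A B : Type) (g : Omega -> A) (u : Omega -> R) (F : A -> R -> B) :
  fmeas g -> measurable_fun setT u -> fmeas (fun w => F (g w) (Num.sg (u w))).
Proof.
move=> mg mu H.
have E : (fun w => H (F (g w) (Num.sg (u w)))) =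
  (fun w => ((0 < u w)%R : nat)%:R * H (F (g w) 1)
          + ((u w < 0)%R : nat)%:R * H (F (g w) (-1))
          + ((u w == 0) : nat)%:R * H (F (g w) 0)).
  apply/funext => w.
  case: (ltgtP (u w) 0) => hu.
  - by rewrite ltr0_sg //= !(mul0r, mul1r, add0r, addr0).
  - by rewrite gtr0_sg //= !(mul0r, mul1r, add0r, addr0).
  - by rewrite hu sgr0 /= !(mul0r, mul1r, add0r, addr0).
rewrite E.
have mb (P : Omega -> bool) : measurable_fun setT P ->
    measurable_fun setT (fun w => ((P w : bool) : nat)%:R : R).
  by move=> mP; exact: measurableT_comp meas_b2R mP.
apply: measurable_funD; first apply: measurable_funD.
- apply: measurable_funM; last exact: (mg (fun a => H (F a 1))).
  by apply: mb; apply: measurable_fun_ltr => //; exact: measurable_cst.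
- apply: measurable_funM; last exact: (mg (fun a => H (F a (-1)))).
  by apply: mb; apply: measurable_fun_ltr => //; exact: measurable_cst.
- apply: measurable_funM; last exact: (mg (fun a => H (F a 0))).
  by apply: mb; apply: measurable_fun_eqr => //; exact: measurable_cst.
Qed.
End M.
Arguments fmeas R {dO Omega A}.

Section P.
Variables (R : realType) (d : nat).

Lemma entry_step (X V : 'rV[R]_d) (eta lam : R) i :
  (X - eta *: (vsign V + lam *: X)) 0 i = X 0 i - eta * (Num.sg (V 0 i) + lam * X 0 i).
Proof. by rewrite !mxE. Qed.

Lemma linf_bnd (u : 'rV[R]_d) i : `|u 0 i| <= linfnorm u.
Proof. rewrite /linfnorm; exact: (le_bigmax 0 (fun i => `|u 0 i|) i). Qed.

Lemma l1_bnd (u V : 'rV[R]_d) (s : R) : 0 < s ->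
  \sum_i `|(u - V) 0 i| <= Num.sqrt (d%:R) * (enorm (u - V) ^+ 2 / s + s) / 2.
Proof.
move=> s0.
have HC := @CS R d (fun i => `|(u - V) 0 i|) (fun _ => 1).
have E1 : \sum_i `|(u - V) 0 i| ^+ 2 = \sum_i (u - V) 0 i ^+ 2.
  by apply: eq_bigr => i _; rewrite real_normK // num_real.
have E2 : \sum_(i < d) (1 : R) ^+ 2 = d%:R.
  by rewrite expr1n sumr_const card_ord.
rewrite E1 E2 in HC.
have HC' : \sum_i `|(u - V) 0 i| <= enorm (u - V) * Num.sqrt d%:R.
  by move: HC; under eq_bigr do rewrite mulr1.
have := @am_gm R (enorm (u - V)) s s0.
move=> h; have := ler_wpM2l (sqrtr_ge0 (d%:R : R)) h.
move: HC'; rewrite (mulrC (enorm _)).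
have : Num.sqrt d%:R * ((enorm (u - V) ^+ 2 / s + s) / 2) =
  Num.sqrt d%:R * (enorm (u - V) ^+ 2 / s + s) / 2 by rewrite mulrA.
lra.
Qed.

Lemma sum_lin (n : nat) (a b : nat -> R) (al be ga s : R) :
  \sum_(1 <= t < n.+1) (al * a t - be * (b t / s + s) - ga) =
  al * \sum_(1 <= t < n.+1) a t
  - be * ((\sum_(1 <= t < n.+1) b t) / s + n%:R * s) - n%:R * ga.
Proof.
elim: n => [|n IH]; first by rewrite !big_geq //; ring.
rewrite !(big_nat_recr n.+1 1) //= IH mulrS; ring.
Qed.

Lemma pointwise (f : 'rV[R]_d -> R) (L : R)
  (f_diff : forall x, differentiable f x)
  (f_smooth : forall x y, enorm (grad f x - grad f y) <= L * enorm (x - y))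
  (L0 : 0 <= L)
  (T : nat) (eta lam Delta : R)
  (hT : (1 <= T)%N) (heta : 0 < eta)
  (hlam0 : 0 <= lam) (hlam1 : lam <= (2 * eta * T%:R)^-1)
  (x1 : 'rV[R]_d) (hx1 : linfnorm x1 <= eta)
  (X V : nat -> 'rV[R]_d) (X1 : X 1%N = x1)
  (Xrec : forall t, (1 <= t <= T)%N -> X t.+1 = X t - eta *: (vsign (V t) + lam *: X t))
  (hlow : forall y, f x1 - f y <= Delta) (s : R) (s0 : 0 < s) :
  T%:R^-1 * \sum_(1 <= t < T.+1) l1norm (grad f (X t)) <=
   2 * Delta / (eta * T%:R) + 4 * eta * L * d%:R + 2 * Num.sqrt d%:R * s
   + (2 * Num.sqrt d%:R / s) *
     (T%:R^-1 * \sum_(1 <= t < T.+1) enorm (grad f (X t) - V t) ^+ 2).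
Proof.
have T0 : 0 < T%:R :> R by rewrite ltr0n.
have T1 : 1 <= T%:R :> R by rewrite ler1n.
have hel : eta * lam * T%:R <= 1/2.
  have p0 : 0 < 2 * eta * T%:R by rewrite !mulr_gt0.
  have := ler_wpM2r (ltW p0) hlam1; rewrite mulVf ?gt_eqF //.
  have : lam * (2 * eta * T%:R) = 2 * (eta * lam * T%:R) by ring.
  lra.
have el0 : 0 <= eta * lam by rewrite mulr_ge0 // ltW.
have el1 : eta * lam <= 1/2.
  have := ler_wpM2l el0 T1; rewrite mulr1; lra.
have B : forall t, (1 <= t <= T.+1)%N -> forall i, `|X t 0 i| <= t%:R * eta.
  elim=> [//|t IH] /andP[_ ht] i.
  case: t IH ht => [|t] IH ht.
    by rewrite X1 mul1r; exact: le_trans (linf_bnd x1 i) hx1.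
  have ht' : (1 <= t.+1 <= T)%N by rewrite ltnS in ht; rewrite ht.
  rewrite Xrec // entry_step.
  have IHi := IH (ltac:(by rewrite /= ltnW)) i.
  move: IHi; set a := X t.+1 0 i; set sv := Num.sg (V t.+1 0 i) => IHi.
  have /andP[s1 s2] := @sg_bnd R (V t.+1 0 i).
  rewrite -/sv in s1 s2.
  move: IHi; rewrite ler_norml => /andP[a1 a2].
  have m1 := ler_wpM2l (ltW heta) s1.
  have m2 := ler_wpM2l (ltW heta) s2.
  have q0 : 0 <= 1 - eta * lam by lra.
  have m3 := ler_wpM2l q0 a1.
  have m4 := ler_wpM2l q0 a2.
  have e1 : a - eta * (sv + lam * a) = (1 - eta * lam) * a - eta * sv by ring.
  rewrite e1 ler_norml -[t.+2]addn1 natrD.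
  have : (t.+1%:R : R) * eta <= T%:R * eta.
    by apply: ler_wpM2r; [exact: ltW | rewrite ler_nat].
  move=> hTe; apply/andP; split; nra.

set C := L / 2 * (d%:R * (9 / 4 * eta ^+ 2)).
set sd := Num.sqrt (d%:R : R).
pose q t := eta / 2 * l1norm (grad f (X t)) - eta * sd * (enorm (grad f (X t) - V t) ^+ 2 / s + s) - C.
have S : forall t, (1 <= t <= T)%N -> q t <= f (X t) - f (X t.+1).
  move=> t ht.
  set g := grad f (X t).
  set h := X t.+1 - X t.
  have Xe : X t.+1 = h + X t by rewrite /h subrK.
  have D := @descent R d f L f_diff f_smooth (X t) h.
  rewrite -Xe -/g in D.
  have hi : forall i, h 0 i = - eta * (Num.sg (V t 0 i) + lam * X t 0 i).
    by move=> i; rewrite /h mxBE Xrec // entry_step; ring.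
  have tT : (t%:R : R) <= T%:R by rewrite ler_nat; case/andP: ht.
  have lam_a : forall i, lam * `|X t 0 i| <= 1/2.
    move=> i; have := B t (ltac:(by case/andP: ht => -> /leqW)) i.
    move=> hb; have := ler_wpM2l hlam0 hb.
    have := ler_wpM2l (mulr_ge0 hlam0 (ltW heta)) tT.
    have : lam * (t%:R * eta) = lam * eta * t%:R by ring.
    have : lam * eta * T%:R = eta * lam * T%:R by ring.
    lra.
  have cs i := @coord_step R eta lam (g 0 i) (V t 0 i) (X t 0 i) heta hlam0 (lam_a i).
  have S1 : \sum_i g 0 i * h 0 i <=
      \sum_i (- (eta / 2) * `|g 0 i| + 2 * eta * `|(g - V t) 0 i|).
    apply: ler_sum => i _; rewrite hi mxBE; exact: (cs i).1.
  have S2 : \sum_i h 0 i ^+ 2 <= d%:R * (9 / 4 * eta ^+ 2).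
    have -> : d%:R * (9 / 4 * eta ^+ 2) = \sum_(i < d) (9 / 4 * eta ^+ 2 : R).
      by rewrite sumr_const card_ord mulr_natl.
    apply: ler_sum => i _; rewrite hi; exact: (cs i).2.
  have E1 : \sum_i (- (eta / 2) * `|g 0 i| + 2 * eta * `|(g - V t) 0 i|) =
     - (eta / 2) * l1norm g + 2 * eta * \sum_i `|(g - V t) 0 i|.
    by rewrite big_split /= -!mulr_sumr.
  rewrite E1 in S1.
  have S3 := @l1_bnd g (V t) s s0.
  have S4 := ler_wpM2l (ltW heta) S3.
  have S5 := ler_wpM2l (mulr_ge0 L0 (ltac:(lra) : (0:R) <= 1/2)) S2.
  rewrite /q -/g -/sd /C.
  have e1 : eta * (sd * (enorm (g - V t) ^+ 2 / s + s) / 2) =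
     eta * sd * (enorm (g - V t) ^+ 2 / s + s) / 2 by ring.
  rewrite -/sd e1 in S4.
  have e2 : L / 2 = L * (1/2) by ring.
  rewrite e2.
  lra.

have Tl := @tele R (fun t => f (X t)) q T S.
rewrite X1 in Tl.
have Tl2 : \sum_(1 <= t < T.+1) q t <= Delta by have := hlow (X T.+1); lra.
have Lin : \sum_(1 <= t < T.+1) q t =
    eta / 2 * \sum_(1 <= t < T.+1) l1norm (grad f (X t))
    - eta * sd * ((\sum_(1 <= t < T.+1) enorm (grad f (X t) - V t) ^+ 2) / s + T%:R * s)
    - T%:R * C.
  transitivity (\sum_(1 <= t < T.+1) (eta / 2 * l1norm (grad f (X t))
     - eta * sd * (enorm (grad f (X t) - V t) ^+ 2 / s + s) - C)).
    by apply: eq_bigr.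
  by rewrite sum_lin.
rewrite Lin in Tl2.
move: Tl2.
move: (\sum_(1 <= t < T.+1) l1norm (grad f (X t))) => Sa.
move: (\sum_(1 <= t < T.+1) enorm (grad f (X t) - V t) ^+ 2) => Se Tl2.
have C0 : 0 <= L * eta * d%:R by rewrite mulr_ge0 // mulr_ge0 // ltW.
have sd0 : 0 <= sd by exact: sqrtr_ge0.
have Id : 2 * Delta / (eta * T%:R) + 4 * eta * L * d%:R + 2 * sd * s +
   2 * sd / s * (T%:R^-1 * Se) - T%:R^-1 * Sa =
   T%:R^-1 * (2 / eta) * (Delta - (eta / 2 * Sa - eta * sd * (Se / s + T%:R * s) - T%:R * C))
   + (4 - 9 / 4) * (L * eta * d%:R).
  rewrite /C; clearbody sd; field; rewrite !gt_eqF //.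
have : 0 <= T%:R^-1 * (2 / eta) * (Delta - (eta / 2 * Sa - eta * sd * (Se / s + T%:R * s) - T%:R * C))
   + (4 - 9 / 4) * (L * eta * d%:R).
  apply: addr_ge0; last by apply: mulr_ge0 => //; lra.
  apply: mulr_ge0; last by lra.
  by apply: mulr_ge0; [rewrite invr_ge0 ltW | rewrite divr_ge0 // ltW].
rewrite -Id; lra.
Qed.


End P.

Section EB.
Variables (R : realType) (dO : measure_display) (Omega : measurableType dO)
  (P : probability Omega R).

Lemma E_bound (A Z : Omega -> R) (K c : R) :
  measurable_fun setT A -> measurable_fun setT Z ->
  (forall w, 0 <= A w) -> (forall w, 0 <= Z w) -> 0 <= K -> 0 <= c ->
  (forall w, A w <= K + c * Z w) ->
  ('E_P[A] <= K%:E + c%:E * 'E_P[Z])%E.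
Proof.
move=> mA mZ A0 Z0 K0 c0 hAZ.
rewrite !unlock.
apply: (@le_trans _ _ (\int[P]_w ((cst K%:E) w + (c%:E * (Z w)%:E)))%E).
  apply: ge0_le_integral => //.
  - by move=> w _; rewrite lee_fin.
  - by apply/measurable_EFinP.
  - apply: emeasurable_funD; first exact: measurable_cst.
    by apply: emeasurable_funM; [exact: measurable_cst | apply/measurable_EFinP].
  - by move=> w _; rewrite /= -EFinM -EFinD lee_fin.
rewrite ge0_integralD //; first last.
- by apply: emeasurable_funM; [exact: measurable_cst | apply/measurable_EFinP].
- by move=> w _; rewrite -EFinM lee_fin mulr_ge0.
have EK : (\int[P]_w ((cst K%:E) w))%E = K%:E.
  by have := expectation_cst P K; rewrite unlock.
rewrite EK ge0_integralZl_EFin //.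
- by move=> w _; rewrite lee_fin.
- by apply/measurable_EFinP.
Qed.
End EB.

Section N.
Variables (R : realType) (dO : measure_display) (Omega : measurableType dO) (d : nat).

Lemma fmeas_rows (X V : Omega -> 'rV[R]_d) :
  fmeas R X -> (forall i, measurable_fun setT (fun w => V w 0 i)) ->
  fmeas R (fun w => (X w, vsign (V w))).
Proof.
move=> mX mV.
suff H : forall k, (k <= d)%N -> fmeas R (fun w => (X w,
    \row_(i < d) (if (i < k)%N then Num.sg (V w 0 i) else 0 : R))).
  have := H d (leqnn d).
  have -> : (fun w => (X w, \row_(i < d) (if (i < d)%N then Num.sg (V w 0 i) else 0 : R)))
          = (fun w => (X w, vsign (V w))).
    by apply/funext => w; congr pair; apply/rowP => i; rewrite !mxE ltn_ord.
  by [].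
elim => [_|k IH hk].
  have -> : (fun w => (X w, \row_(i < d) (if (i < 0)%N then Num.sg (V w 0 i) else 0 : R)))
      = (fun w => (fun a => (a, \row_(i < d) (0 : R))) (X w)).
    by apply/funext => w; congr pair; apply/rowP => i; rewrite !mxE.
  exact: (@fmeas_comp R dO Omega _ _ X (fun a => (a, \row_(i < d) (0 : R))) mX).
pose ik : 'I_d := Ordinal hk.
have := @fmeas_sg R dO Omega _ _ _ (fun w => V w 0 ik)
  (fun (p : 'rV[R]_d * 'rV[R]_d) (c : R) =>
     (p.1, \row_(i < d) (if (i < k.+1)%N then (if (i : nat) == k then c else p.2 0 i) else 0 : R)))
  (IH (ltnW hk)) (mV ik).
have -> : (fun w => (X w, \row_(i < d) (if (i < k.+1)%N then Num.sg (V w 0 i) else 0 : R))) =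
  (fun w => (fun (p : 'rV[R]_d * 'rV[R]_d) (c : R) =>
     (p.1, \row_(i < d) (if (i < k.+1)%N then (if (i : nat) == k then c else p.2 0 i) else 0 : R)))
     (X w, \row_(i < d) (if (i < k)%N then Num.sg (V w 0 i) else 0 : R))
     (Num.sg (V w 0 ik))).
  apply/funext => w /=; congr pair; apply/rowP => i; rewrite !mxE.
  case: ifP => // ik1.
  case: eqP => [ei|nei].
    by congr (Num.sg (V w 0 _)); apply: val_inj.
  by move: ik1; rewrite ltnS leq_eqVlt; case: eqP => // _ /= ->.
by [].
Qed.

Lemma meas_sum_nat (F : nat -> Omega -> R) (n : nat) :
  (forall t, (1 <= t < n)%N -> measurable_fun setT (F t)) ->
  measurable_fun setT (fun w => \sum_(1 <= t < n) F t w).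
Proof.
elim: n => [|n IH] H.
  by under eq_fun do rewrite big_geq //; exact: measurable_cst.
case: n IH H => [|n] IH H.
  by under eq_fun do rewrite big_geq //; exact: measurable_cst.
under eq_fun do rewrite big_nat_recr //=.
apply: measurable_funD.
  by apply: IH => t /andP[t1 t2]; apply: H; rewrite t1 /= ltnW.
by apply: H; rewrite /= ltnSn.
Qed.
End N.

Close Scope classical_set_scope.

Theorem mainTheorem2 (R : realType) (d : nat)
  (f : 'rV[R]_d -> R) (L : R)
  (f_diff : forall x, differentiable f x)
  (f_smooth : forall x y, enorm (grad f x - grad f y) <= L * enorm (x - y))
  (f_lb : exists m : R, forall x, m <= f x)
  (T : nat) (eta lam Delta : R)
  (hT : (1 <= T)%N) (heta : 0 < eta)
  (hlam0 : 0 <= lam) (hlam1 : lam <= (2 * eta * T%:R)^-1)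
  (x1 : 'rV[R]_d)
  (hx1 : linfnorm x1 <= eta)
  (hDelta : f x1 - inf (range f) <= Delta)
  (dO : measure_display) (Omega : measurableType dO) (P : probability Omega R)
  (v : nat -> Omega -> 'rV[R]_d)
  (v_meas : forall t (i : 'I_d), measurable_fun setT (fun w => v t w 0 i))
  (x : nat -> Omega -> 'rV[R]_d)
  (x_init : forall w, x 1%N w = x1)
  (x_rec : forall t w, (1 <= t <= T)%N ->
     x t.+1 w = x t w - eta *: (vsign (v t w) + lam *: x t w)) :
  ('E_P[fun w => (T%:R^-1 * \sum_(1 <= t < T.+1) l1norm (grad f (x t w)))%R]
   <= (2 * Delta / (eta * T%:R))%:E
      + (4 * Num.sqrt (d%:R))%:E
        * sqrte ('E_P[fun w => (T%:R^-1 *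
              \sum_(1 <= t < T.+1) enorm (grad f (x t w) - v t w) ^+ 2)%R])
      + (4 * eta * L * d%:R)%:E)%E.
Proof.
have hlb : has_lbound (range f).
  by case: f_lb => m hm; exists m => _ [y _ <-]; exact: hm.
have hlow : forall y, f x1 - f y <= Delta.
  move=> y; have Hi : inf (range f) <= f y by apply: (ge_inf hlb); exists y.
  lra.
have D0 : 0 <= Delta by have := hlow x1; lra.
have T0 : 0 < T%:R :> R by rewrite ltr0n.
have A0 : forall w, 0 <= T%:R^-1 * \sum_(1 <= t < T.+1) l1norm (grad f (x t w)).
  move=> w; apply: mulr_ge0; first by rewrite invr_ge0 ltW.
  by apply: sumr_ge0 => t _; apply: sumr_ge0 => i _.
have Z0 : forall w, 0 <= T%:R^-1 * \sum_(1 <= t < T.+1) enorm (grad f (x t w) - v t w) ^+ 2.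
  move=> w; apply: mulr_ge0; first by rewrite invr_ge0 ltW.
  by apply: sumr_ge0 => t _; apply: sqr_ge0.
case: (posnP d) => [d0|dpos].
  subst d.
  have -> : (fun w => T%:R^-1 * \sum_(1 <= t < T.+1) l1norm (grad f (x t w))) = cst 0.
    apply/funext => w; rewrite big1 ?mulr0 // => t _.
    by rewrite /l1norm big_ord0.
  rewrite expectation_cst sqrtr0 mulr0 mul0e mulr0 adde0 addr0 lee_fin.
  by apply: divr_ge0; [lra | rewrite mulr_ge0 // ltW].
have L0 : 0 <= L.
  have := f_smooth (const_mx 1) 0.
  have E : enorm ((const_mx 1 : 'rV[R]_d) - 0) = Num.sqrt d%:R.
    rewrite /enorm; congr Num.sqrt.
    under eq_bigr do rewrite mxBE !mxE subr0 expr1n.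
    by rewrite sumr_const card_ord.
  rewrite E => h.
  have hs : 0 < Num.sqrt (d%:R : R) by rewrite sqrtr_gt0 ltr0n.
  rewrite -(pmulr_lge0 _ hs); apply: le_trans h.
  by apply: sqrtr_ge0.
have mx : forall t, (1 <= t <= T.+1)%N -> fmeas R (x t).
  elim=> [//|t IH] /andP[_ ht].
  case: t IH ht => [|t] IH ht.
    have -> : x 1%N = fun _ => x1 by apply/funext => w; exact: x_init.
    exact: fmeas_cst.
  have ht' : (1 <= t.+1 <= T)%N by rewrite ltnS in ht; rewrite ht.
  have -> : x t.+2 = (fun w => (fun p : 'rV[R]_d * 'rV[R]_d =>
       p.1 - eta *: (p.2 + lam *: p.1)) (x t.+1 w, vsign (v t.+1 w))).
    by apply/funext => w; rewrite x_rec.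
  have IH' := IH (ltac:(by rewrite /= ltnW)).
  have := @fmeas_rows R dO Omega d (x t.+1) (v t.+1) IH' (v_meas t.+1).
  move=> H; exact: (@fmeas_comp R dO Omega _ _ _ (fun p : 'rV[R]_d * 'rV[R]_d => p.1 - eta *: (p.2 + lam *: p.1)) H).
have mA : measurable_fun setT
   (fun w => T%:R^-1 * \sum_(1 <= t < T.+1) l1norm (grad f (x t w))).
  apply: measurable_funM; first exact: measurable_cst.
  apply: meas_sum_nat => t /andP[t1 t2].
  exact: (mx t (ltac:(by rewrite t1 /= ltnW)) (fun a => l1norm (grad f a))).
have mZ : measurable_fun setT
   (fun w => T%:R^-1 * \sum_(1 <= t < T.+1) enorm (grad f (x t w) - v t w) ^+ 2).
  apply: measurable_funM; first exact: measurable_cst.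
  apply: meas_sum_nat => t /andP[t1 t2].
  have -> : (fun w => enorm (grad f (x t w) - v t w) ^+ 2) =
     (fun w => \sum_i (grad f (x t w) 0 i - v t w 0 i) ^+ 2).
    apply/funext => w; rewrite /enorm sqr_sqrtr; last first.
      by apply: sumr_ge0 => i _; apply: sqr_ge0.
    by apply: eq_bigr => i _; rewrite mxBE.
  apply: measurable_sum => i.
  apply: measurable_funX; apply: measurable_funB; last exact: v_meas.
  exact: (mx t (ltac:(by rewrite t1 /= ltnW)) (fun a => grad f a 0 i)).
have sd0 : 0 < Num.sqrt (d%:R : R) by rewrite sqrtr_gt0 ltr0n.
have key : forall s, 0 < s ->
  ('E_P[fun w => (T%:R^-1 * \sum_(1 <= t < T.+1) l1norm (grad f (x t w)))%R]
   <= (2 * Delta / (eta * T%:R) + 4 * eta * L * d%:R + 2 * Num.sqrt d%:R * s)%:E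
      + (2 * Num.sqrt d%:R / s)%:E * 'E_P[fun w => (T%:R^-1 *
              \sum_(1 <= t < T.+1) enorm (grad f (x t w) - v t w) ^+ 2)%R])%E.
  move=> s s0.
  apply: (@E_bound R dO Omega P) => //.
  - have h1 : 0 <= 2 * Delta / (eta * T%:R).
      by apply: divr_ge0; [lra | rewrite mulr_ge0 // ltW].
    have h2 : 0 <= eta * L * d%:R by rewrite !mulr_ge0 // ltW.
    have h3 : 0 <= Num.sqrt d%:R * s by rewrite mulr_ge0 // ltW.
    have : 4 * eta * L * d%:R = 4 * (eta * L * d%:R) by ring.
    have : 2 * Num.sqrt d%:R * s = 2 * (Num.sqrt d%:R * s) by ring.
    lra.
  - by apply: divr_ge0; [lra | exact: ltW].
  - move=> w.
    exact: (@pointwise R d f L f_diff f_smooth L0 T eta lam Delta hT heta hlam0 hlam1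
      x1 hx1 (fun t => x t w) (fun t => v t w) (x_init w)
      (fun t ht => x_rec t w ht) hlow s s0).
have EZ0 : (0 <= 'E_P[fun w => (T%:R^-1 *
              \sum_(1 <= t < T.+1) enorm (grad f (x t w) - v t w) ^+ 2)%R])%E.
  by rewrite unlock; apply: integral_ge0 => w _; rewrite lee_fin.
move: key EZ0.
case: ('E_P[fun w => (T%:R^-1 *
              \sum_(1 <= t < T.+1) enorm (grad f (x t w) - v t w) ^+ 2)%R])%E => [r| |] key EZ0.
- rewrite /= -EFinM -!EFinD.
  apply/lee_addgt0Pr => e e0.
  rewrite lee_fin in EZ0.
  set q := Num.sqrt r.
  have q0 : 0 <= q by exact: sqrtr_ge0.
  have rq : r = q ^+ 2 by rewrite sqr_sqrtr.
  set e' := e / (2 * Num.sqrt d%:R).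
  have e'0 : 0 < e' by rewrite divr_gt0 // mulr_gt0.
  have s0 : 0 < q + e' by lra.
  apply: le_trans (key _ s0) _.
  rewrite -EFinM -EFinD -EFinD lee_fin.
  have h1 : 2 * Num.sqrt d%:R * e' = e by rewrite /e'; field; rewrite gt_eqF.
  have h2 : r / (q + e') <= q.
    rewrite ler_pdivrMr // rq mulrDr expr2; have := mulr_ge0 q0 (ltW e'0); lra.
  have h3 := ler_wpM2l (ltW (mulr_gt0 (ltr0n _ 2) sd0)) h2.
  have h4 : 2 * Num.sqrt d%:R / (q + e') * r = 2 * Num.sqrt d%:R * (r / (q + e')) by ring.
  rewrite h4; lra.
- rewrite /= mulry gtr0_sg ?mul1e; last by rewrite mulr_gt0.
  by rewrite addey // addye // leey.
- by [].
Qed.
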